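(* Let $a<b$ and let $f:[a,b]\to\mathbb{R}$ be continuous. Define $$I_f(a,x)=\frac{1}{x-a}\int_a^x f(t)\,\mathrm{d}t\ (a<x\le b),\quad B_f(a,b)=\frac{b-a}{2}\,I_f(a,b),\quad J_f(a,b)=b\,I_f(a,b)-\frac{1}{b-a}\int_a^b t\,f(t)\,\mathrm{d}t.$$ Then there exists $\eta\in(a,b)$ such that $$f(\eta)=I_f(a,\eta)+\frac{6\,[B_f(a,b)-J_f(a,b)]}{(b-a)^2}(\eta-a).$$ *)

(* Defs.v *)
From Stdlib Require Import Reals Lra.
From Coquelicot Require Import Coquelicot.
Open Scope R_scope.

Definition If_ (f : R -> R) (a x : R) : R := / (x - a) * RInt f a x.

Definition Bf (f : R -> R) (a b : R) : R := (b - a) / 2 * If_ f a b.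

Definition Jf (f : R -> R) (a b : R) : R :=
  b * If_ f a b - / (b - a) * RInt (fun t => t * f t) a b.

Definition cont_on_closed (f : R -> R) (a b : R) : Prop :=
  forall x, a <= x <= b ->
    filterlim f (within (fun y => a <= y <= b) (locally x)) (locally (f x)).

(* Main.v *)
Require Import Defs.
From Stdlib Require Import Reals Lra.
From Coquelicot Require Import Coquelicot.
Open Scope R_scope.

Definition clamp (a b x : R) := Rmax a (Rmin b x).

Lemma clamp_lip a b x y : a <= b -> Rabs (clamp a b y - clamp a b x) <= Rabs (y - x).
Proof.
  intros. unfold clamp, Rmax, Rmin.
  repeat destruct Rle_dec; unfold Rabs; repeat destruct Rcase_abs; lra.
Qed.

Lemma clamp_in a b x : a <= b -> a <= clamp a b x <= b.
Proof. intros. unfold clamp, Rmax, Rmin. repeat destruct Rle_dec; lra. Qed.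

Lemma clamp_id a b x : a <= x <= b -> clamp a b x = x.
Proof. intros. unfold clamp, Rmax, Rmin. repeat destruct Rle_dec; lra. Qed.

Lemma clamp_cont a b x : a <= b -> continuous (clamp a b) x.
Proof.
  intros Hab. apply filterlim_locally. intros eps. exists eps. intros y Hy.
  change (Rabs (clamp a b y - clamp a b x) < eps).
  change (Rabs (y - x) < eps) in Hy.
  eapply Rle_lt_trans. apply clamp_lip; lra. exact Hy.
Qed.

Lemma g_cont a b f x : a < b -> cont_on_closed f a b ->
  continuous (fun y => f (clamp a b y)) x.
Proof.
  intros Hab Hf A HA.
  assert (Hin := clamp_in a b x (Rlt_le _ _ Hab)).
  specialize (Hf _ Hin A HA).
  assert (Hc := clamp_cont a b x (Rlt_le _ _ Hab) _ Hf).
  unfold filtermap in *. simpl in Hc.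
  eapply filter_imp. 2: exact Hc. intros y Hy. apply Hy. apply clamp_in; lra.
Qed.

Lemma derV (F P gg : R -> R) c wb a x : is_derive F x (gg x) -> is_derive P x (x * gg x) ->
  is_derive (fun x => x * F x - P x - c * (x - a)^3 / 3 - wb * (x - a)^2 / 2) x
    (F x - c * (x - a)^2 - wb * (x - a)).
Proof.
  intros HF HP. auto_derive.
  - split; [exists (gg x); exact HF | split; [exists (x * gg x); exact HP | easy]].
  - replace (Derive (fun x0 => F x0) x) with (gg x) by (symmetry; apply is_derive_unique; exact HF). replace (Derive (fun x0 => P x0) x) with (x * gg x) by (symmetry; apply is_derive_unique; exact HP). field.
Qed.

Lemma derW (F gg : R -> R) c a x : x <> a -> is_derive F x (gg x) ->
  is_derive (fun x => F x / (x - a) - c * (x - a)) x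
    ((gg x * (x - a) - F x) / (x - a)^2 - c).
Proof.
  intros Hx HF. auto_derive.
  - split; [exists (gg x); exact HF | split; [lra|easy]].
  - replace (Derive (fun x0 => F x0) x) with (gg x) by (symmetry; apply is_derive_unique; exact HF). field. lra.
Qed.

Lemma rolle' (h dh : R -> R) l r : l < r ->
  (forall x, l <= x <= r -> is_derive h x (dh x)) -> h l = h r ->
  exists c, l < c < r /\ dh c = 0.
Proof.
  intros Hlr Hd Heq.
  assert (pr : forall x, l < x < r -> derivable_pt h x).
  { intros x Hx. apply ex_derive_Reals_0. exists (dh x). apply Hd. lra. }
  destruct (Rolle h l r pr) as [c [Pc Hc]]; auto.
  - intros x Hx. apply derivable_continuous_pt. apply ex_derive_Reals_0.
    exists (dh x). apply Hd. lra.
  - exists c. split; auto. rewrite Derive_Reals in Hc.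
    rewrite (is_derive_unique _ _ _ (Hd c ltac:(lra))) in Hc. exact Hc.
Qed.

Theorem mainTheorem8 (a b : R) (f : R -> R) :
  a < b -> cont_on_closed f a b ->
  exists eta : R, a < eta < b /\
    f eta = If_ f a eta + 6 * (Bf f a b - Jf f a b) / (b - a) ^ 2 * (eta - a).
Proof.
  intros Hab Hf.
  set (g := fun y => f (clamp a b y)).
  assert (Hg : forall x, continuous g x) by (intros; apply g_cont; auto).
  set (h := fun t => t * g t).
  assert (Hh : forall x, continuous h x).
  { intros x. apply (continuous_mult (fun t => t) g). apply continuous_id. apply Hg. }
  set (F := fun x => RInt g a x).
  set (P := fun x => RInt h a x).
  assert (HF : forall x, is_derive F x (g x)).
  { intros x. apply (is_derive_RInt g F a). apply filter_forall. intros y. unfold F, P.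
    apply (RInt_correct g a y). apply ex_RInt_continuous. intros; apply Hg. apply Hg. }
  assert (HP : forall x, is_derive P x (x * g x)).
  { intros x. apply (is_derive_RInt h P a). apply filter_forall. intros y. unfold F, P.
    apply (RInt_correct h a y). apply ex_RInt_continuous. intros; apply Hh. apply Hh. }
  assert (EF : forall x, a < x <= b -> RInt f a x = F x).
  { intros x Hx. unfold F. apply RInt_ext. intros t Ht.
    rewrite Rmin_left in Ht by lra. rewrite Rmax_right in Ht by lra.
    unfold g. rewrite clamp_id; lra. }
  assert (EP : forall x, a < x <= b -> RInt (fun t => t * f t) a x = P x).
  { intros x Hx. unfold P. apply RInt_ext. intros t Ht.
    rewrite Rmin_left in Ht by lra. rewrite Rmax_right in Ht by lra.
    unfold h, g. rewrite clamp_id; lra. }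
  set (c := 6 * (Bf f a b - Jf f a b) / (b - a) ^ 2).
  assert (Hc : c = 6 * ((b - a) / 2 * (/ (b - a) * F b) -
      (b * (/ (b - a) * F b) - / (b - a) * P b)) / (b - a) ^ 2).
  { unfold c, Bf, Jf, If_. rewrite EF by lra. rewrite EP by lra. reflexivity. }
  set (wb := F b / (b - a) - c * (b - a)).
  destruct (rolle' (fun x => x * F x - P x - c * (x - a)^3 / 3 - wb * (x - a)^2 / 2)
     (fun x => F x - c * (x - a)^2 - wb * (x - a)) a b Hab) as [xi [Hxi Exi]].
  { intros x _. apply (derV F P g); auto. }
  { unfold F at 1, P at 1. rewrite !RInt_point. unfold wb. rewrite Hc.
    change (zero : R) with 0. field. lra. }
  destruct (rolle' (fun x => F x / (x - a) - c * (x - a))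
     (fun x => (g x * (x - a) - F x) / (x - a)^2 - c) xi b) as [eta [Heta Eeta]].
  { lra. }
  { intros x Hx. apply (derW F g); [lra | auto]. }
  { unfold wb in Exi. simpl.
    assert (E : F xi = c * ((xi - a) * ((xi - a) * 1)) + (F b / (b - a) - c * (b - a)) * (xi - a)) by lra.
    rewrite E. field. lra. }
  exists eta. split. lra.
  fold c. unfold If_. rewrite EF by lra.
  assert (Hge : g eta = f eta) by (unfold g; rewrite clamp_id; lra).
  rewrite <- Hge.
  assert (E : (g eta * (eta - a) - F eta) / (eta - a)^2 = c) by lra.
  rewrite <- E. field. lra.
Qed.
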